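(* Let $(G,R)$ be a multirooted graph, let $c$ be a domain preserving partial colouring of $(G,R)$, and let $\Gamma$ be the stabiliser of $c$ in $\mathrm{Aut}(G,R)$. Let $A$ and $B$ be moving tuples (with respect to $c$), each with at most $3$ elements. If $A$ has an uncommon neighbour in $B$, then $B$ has an uncommon neighbour in $A$, and there is a bijection $f\colon A\to B$ such that for every $\gamma\in\Gamma$ we have $\gamma|_B = f\circ\gamma|_A\circ f^{-1}$. In particular, every $\gamma\in\Gamma$ that fixes a vertex $v\in A$ also fixes $f(v)\in B$, and vice versa.
   Context: All graphs are simple, connected and locally finite. A multirooted graph $(G,R)$ is a graph $G=(V,E)$ together with a set $R\subseteq V$ of roots; $\mathrm{Aut}(G,R)$ is the group of automorphisms of $G$ fixing every vertex of $R$. A partial colouring is a function $c$ from a set $\mathrm{dom}(c)\subseteq V$ to a set of colours. An automorphism $\gamma$ preserves $c$ if $c(v)=c(\gamma v)$ whenever both are defined; the stabiliser of $c$ is the set of $c$-preserving automorphisms in $\mathrm{Aut}(G,R)$. The colouring $c$ is domain preserving if every $c$-preserving automorphism of $(G,R)$ maps $\mathrm{dom}(c)$ onto itself (in this case the stabiliser is a group). For a domain preserving $c$: a vertex $v\in V\setminus R$ is charted if it is coloured or has a neighbour in $R$; a moving tuple is an orbit of a charted vertex under the stabiliser of $c$. A vertex $w\notin R$ is an uncommon neighbour of a moving tuple $A$ if $w$ is adjacent to some but not all members of $A$. *)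

(* Defs.v *)
(* graphs may be infinite (locally finite, connected), so we
   work over an arbitrary vertex type V with a Prop-valued adjacency. *)
From Stdlib Require Import List Relations.
Import ListNotations.
Set Implicit Arguments.

Section Graphs.
Variable V : Type.
Variable adj : V -> V -> Prop.

Definition simple_graph : Prop :=
  (forall v, ~ adj v v) /\ (forall u v, adj u v -> adj v u).

Definition connected_graph : Prop :=
  forall u v, clos_refl_trans V adj u v.

Definition locally_finite : Prop :=
  forall v, exists l : list V, forall w, adj v w -> In w l.

Definition graph_aut (g : V -> V) : Prop :=
  (exists h : V -> V, (forall x, h (g x) = x) /\ (forall y, g (h y) = y)) /\
  (forall u v, adj u v <-> adj (g u) (g v)).

Definition rooted_aut (R : V -> Prop) (g : V -> V) : Prop :=
  graph_aut g /\ (forall r, R r -> g r = r).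

Variable C : Type.
(* a partial colouring is given by its domain dom and a colour function c
   (only its values on dom matter) *)
Definition preserves (dom : V -> Prop) (c : V -> C) (g : V -> V) : Prop :=
  forall v, dom v -> dom (g v) -> c v = c (g v).

Definition stabiliser (R : V -> Prop) (dom : V -> Prop) (c : V -> C)
  (g : V -> V) : Prop :=
  rooted_aut R g /\ preserves dom c g.

Definition domain_preserving (R : V -> Prop) (dom : V -> Prop) (c : V -> C) : Prop :=
  forall g, stabiliser R dom c g ->
    (forall v, dom v -> dom (g v)) /\
    (forall w, dom w -> exists v, dom v /\ g v = w).

Definition charted (R : V -> Prop) (dom : V -> Prop) (v : V) : Prop :=
  ~ R v /\ (dom v \/ exists r, R r /\ adj v r).

Definition moving_tuple (R : V -> Prop) (dom : V -> Prop) (c : V -> C)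
  (A : V -> Prop) : Prop :=
  exists v, charted R dom v /\
    (forall x, A x <-> exists g, stabiliser R dom c g /\ g v = x).

Definition at_most (n : nat) (A : V -> Prop) : Prop :=
  exists l : list V, length l <= n /\ forall x, A x <-> In x l.

Definition uncommon_neighbour (R : V -> Prop) (A : V -> Prop) (w : V) : Prop :=
  ~ R w /\ (exists a, A a /\ adj w a) /\ (exists a, A a /\ ~ adj w a).
End Graphs.

(* Main.v *)
Require Import Defs.
From Stdlib Require Import List Relations.
From Stdlib Require Import Classical ClassicalEpsilon Permutation Lia Arith.
Import ListNotations.

Definition bdec (P : Prop) : nat := if excluded_middle_informative P then 1 else 0.

Fixpoint cnt {V} (P : V -> Prop) (l : list V) : nat :=
  match l with [] => 0 | x :: t => bdec (P x) + cnt P t end.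

Fixpoint sumf {V} (f : V -> nat) (l : list V) : nat :=
  match l with [] => 0 | x :: t => f x + sumf f t end.

Lemma bdec_le P : bdec P <= 1.
Proof. unfold bdec; destruct (excluded_middle_informative P); lia. Qed.

Lemma bdec_t (P : Prop) : P -> bdec P = 1.
Proof. unfold bdec; destruct (excluded_middle_informative P); tauto. Qed.

Lemma bdec_f (P : Prop) : ~ P -> bdec P = 0.
Proof. unfold bdec; destruct (excluded_middle_informative P); tauto. Qed.

Lemma cnt_perm V (P : V -> Prop) (l l' : list V) : Permutation l l' -> cnt P l = cnt P l'.
Proof. induction 1; simpl; lia. Qed.

Lemma cnt_map V (P : V -> Prop) (g : V -> V) (l : list V) : cnt P (map g l) = cnt (fun x => P (g x)) l.
Proof. induction l; simpl; auto. Qed.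

Lemma cnt_ext V (P Q : V -> Prop) (l : list V) :
  (forall x, In x l -> (P x <-> Q x)) -> cnt P l = cnt Q l.
Proof.
  induction l as [|x t IH]; simpl; intros H; auto.
  rewrite IH by auto. f_equal.
  destruct (classic (P x)) as [p|p].
  - rewrite !bdec_t; auto. apply H; auto.
  - rewrite !bdec_f; auto. rewrite <- H; auto.
Qed.

Lemma cnt_compl V P (l:list V) : cnt P l + cnt (fun x => ~ P x) l = length l.
Proof.
  induction l as [|x t IH]; simpl; auto.
  destruct (classic (P x)) as [p|p].
  - rewrite bdec_t, bdec_f; auto. lia.
  - rewrite bdec_f, bdec_t; auto. lia.
Qed.

Lemma cnt_pos V P (l:list V) : 0 < cnt P l -> exists x, In x l /\ P x.
Proof.
  induction l as [|x t IH]; simpl; intros H; [lia|].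
  destruct (classic (P x)) as [p|p]; [exists x; auto|].
  rewrite bdec_f in H by auto. destruct IH as [y [? ?]]; auto. exists y; auto.
Qed.

Lemma cnt_ge1 V P (l:list V) x : In x l -> P x -> 0 < cnt P l.
Proof.
  induction l as [|z t IH]; simpl; intros H p; [tauto|].
  destruct H as [<-|H].
  - rewrite bdec_t; auto. lia.
  - specialize (IH H p). lia.
Qed.

Lemma cnt_lt V P (l:list V) : cnt P l < length l -> exists x, In x l /\ ~ P x.
Proof.
  intros H. pose proof (cnt_compl V P l). apply cnt_pos. lia.
Qed.

Lemma cnt_lt_ex V P (l:list V) x : In x l -> ~ P x -> cnt P l < length l.
Proof.
  intros H p. pose proof (cnt_compl V P l). pose proof (cnt_ge1 V (fun x => ~ P x) l x H p).
  lia.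
Qed.

Lemma cnt_zero V P (l:list V) x : cnt P l = 0 -> In x l -> P x -> False.
Proof. intros H I p. pose proof (cnt_ge1 V P l x I p). lia. Qed.

Lemma cnt_one V P (l : list V) : NoDup l -> cnt P l = 1 ->
  forall x y, In x l -> In y l -> P x -> P y -> x = y.
Proof.
  induction l as [|z t IH]; simpl; intros ND H x y Ix Iy px py; [tauto|].
  inversion ND; subst.
  destruct Ix as [<-|Ix]; destruct Iy as [<-|Iy]; auto.
  - rewrite bdec_t in H by auto. exfalso; apply (cnt_zero V P t y); auto; lia.
  - rewrite bdec_t in H by auto. exfalso; apply (cnt_zero V P t x); auto; lia.
  - destruct (classic (P z)) as [p|p].
    + rewrite bdec_t in H by auto. exfalso; apply (cnt_zero V P t x); auto; lia.
    + rewrite bdec_f in H by auto. apply IH; auto.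
Qed.

Lemma cnt_sumf V P (l : list V) : cnt P l = sumf (fun x => bdec (P x)) l.
Proof. induction l; simpl; auto. Qed.

Lemma sumf_add V f g (l : list V) :
  sumf (fun x => f x + g x) l = sumf f l + sumf g l.
Proof. induction l; simpl; auto; lia. Qed.

Lemma sumf_zero V (l : list V) : sumf (fun _ => 0) l = 0.
Proof. induction l; simpl; auto. Qed.

Lemma sumf_const V f (l:list V) k : (forall x, In x l -> f x = k) -> sumf f l = k * length l.
Proof.
  induction l as [|x t IH]; simpl; intros H; [lia|].
  rewrite H, IH by auto. lia.
Qed.

Lemma fubini U W (Rl : U -> W -> Prop) lu lw :
  sumf (fun u => cnt (Rl u) lw) lu = sumf (fun w => cnt (fun u => Rl u w) lu) lw.
Proof.
  induction lu as [|u t IH]; simpl.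
  - symmetry; apply sumf_zero.
  - rewrite IH, sumf_add, cnt_sumf. reflexivity.
Qed.

Lemma dedup V (l : list V) :
  exists l', NoDup l' /\ (forall x, In x l <-> In x l') /\ length l' <= length l.
Proof.
  induction l as [|a t IH].
  - exists []; simpl; repeat split; auto using NoDup_nil.
  - destruct IH as [l' [Hn [Hi Hl]]].
    destruct (classic (In a l')).
    + exists l'. split; auto. split; [|simpl; lia].
      intro x; simpl; rewrite Hi. split; [intros [<-|?]; auto | auto].
    + exists (a :: l'). split; [constructor; auto|]. split; [|simpl; lia].
      intro x; simpl; rewrite Hi; tauto.
Qed.

Lemma arith nA nB k m : nA <= 3 -> nB <= 3 -> 0 < k -> k < nA -> 0 < m ->
  k * nB = m * nA -> nA = nB /\ m = k /\ m < nB /\ (k = 1 \/ (k = 2 /\ nA = 3)).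
Proof.
  intros; destruct nA as [|[|[|[|]]]]; destruct nB as [|[|[|[|]]]]; lia.
Qed.

Lemma stab_comp V adj C R dom (c : V -> C) g h :
  domain_preserving adj R dom c -> stabiliser adj R dom c g -> stabiliser adj R dom c h ->
  stabiliser adj R dom c (fun x => g (h x)).
Proof.
  intros DP Sg Sh.
  destruct (DP h Sh) as [Dh _].
  destruct Sg as [[[[gi [g1 g2]] ga] gr] gp].
  destruct Sh as [[[[hi [h1 h2]] ha] hr] hp].
  split; [split; [split|]|].
  - exists (fun y => hi (gi y)); split; intros; [rewrite g1, h1 | rewrite h2, g2]; auto.
  - intros u v. rewrite (ha u v). apply ga.
  - intros r Hr. rewrite hr, gr; auto.
  - intros x Dx Dgh. rewrite (hp x Dx (Dh x Dx)). apply gp; auto.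
Qed.

Lemma stab_inv V adj C R dom (c : V -> C) g gi :
  stabiliser adj R dom c g -> (forall x, gi (g x) = x) -> (forall y, g (gi y) = y) ->
  stabiliser adj R dom c gi.
Proof.
  intros [[[_ ga] gr] gp] g1 g2.
  split; [split; [split|]|].
  - exists g; split; auto.
  - intros u v. rewrite (ga (gi u) (gi v)), !g2. tauto.
  - intros r Hr. transitivity (gi (g r)); [rewrite gr; auto | apply g1].
  - intros x Dx Dgx. pose proof (gp (gi x) Dgx) as H. rewrite g2 in H.
    symmetry; apply H; auto.
Qed.

Lemma stab_inverse V adj C R dom (c : V -> C) g :
  stabiliser adj R dom c g -> exists gi, stabiliser adj R dom c gi /\
     (forall x, gi (g x) = x) /\ (forall y, g (gi y) = y).
Proof.
  intros S. pose proof S as [[[[gi [g1 g2]] _] _] _].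
  exists gi; split; auto. eapply stab_inv; eauto.
Qed.

Lemma orb_closed V adj C R dom (c : V -> C) A :
  domain_preserving adj R dom c -> moving_tuple adj R dom c A ->
  forall h x, stabiliser adj R dom c h -> A x -> A (h x).
Proof.
  intros DP [v0 [_ HA]] h x Sh Ax. apply HA in Ax. destruct Ax as [g [Sg <-]].
  apply HA. exists (fun y => h (g y)); split; auto. apply stab_comp; auto.
Qed.

Lemma orb_trans V adj C R dom (c : V -> C) A :
  domain_preserving adj R dom c -> moving_tuple adj R dom c A ->
  forall x y, A x -> A y -> exists h, stabiliser adj R dom c h /\ h x = y.
Proof.
  intros DP [v0 [_ HA]] x y Ax Ay. apply HA in Ax, Ay.
  destruct Ax as [g1 [S1 <-]]. destruct Ay as [g2 [S2 <-]].
  destruct (stab_inverse _ _ _ _ _ _ _ S1) as [gi [Si [i1 i2]]].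
  exists (fun z => g2 (gi z)); split; [apply stab_comp; auto | rewrite i1; auto].
Qed.

Lemma orb_notR V adj C R dom (c : V -> C) A :
  moving_tuple adj R dom c A -> forall x, A x -> ~ R x.
Proof.
  intros [v0 [[nR _] HA]] x Ax Rx. apply HA in Ax. destruct Ax as [g [Sg <-]].
  destruct Sg as [[[[gi [g1 g2]] _] gr] _].
  apply nR. rewrite <- (g1 v0).
  assert (E: gi (g (g v0)) = g v0) by apply g1. rewrite (gr _ Rx) in E. rewrite E. auto.
Qed.

Lemma cnt_inv V adj C R dom (c:V->C) (X : V -> Prop) lX (P : V -> Prop) g :
  (forall h x, stabiliser adj R dom c h -> X x -> X (h x)) ->
  NoDup lX -> (forall x, X x <-> In x lX) ->
  stabiliser adj R dom c g ->
  cnt P lX = cnt (fun x => P (g x)) lX.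
Proof.
  intros CL ND HX Sg.
  destruct (stab_inverse _ _ _ _ _ _ _ Sg) as [gi [Si [i1 i2]]].
  rewrite <- (cnt_map V P g lX). apply cnt_perm. apply NoDup_Permutation; auto.
  - apply FinFun.Injective_map_NoDup; auto.
    intros x y H. rewrite <- (i1 x), <- (i1 y), H; auto.
  - intro x; split; intro H.
    + rewrite <- (i2 x). apply in_map. apply HX. apply CL; auto. apply HX; auto.
    + apply in_map_iff in H. destruct H as [y [<- Hy]]. apply HX. apply CL; auto.
      apply HX; auto.
Qed.

Theorem lemma3p1 (V : Type) (adj : V -> V -> Prop) (C : Type)
  (R : V -> Prop) (dom : V -> Prop) (c : V -> C) (A B : V -> Prop) :
  simple_graph adj -> connected_graph adj -> locally_finite adj ->
  domain_preserving adj R dom c ->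
  moving_tuple adj R dom c A -> moving_tuple adj R dom c B ->
  at_most 3 A -> at_most 3 B ->
  (exists w, B w /\ uncommon_neighbour adj R A w) ->
  (exists w, A w /\ uncommon_neighbour adj R B w) /\
  exists (f finv : V -> V),
    (forall a, A a -> B (f a)) /\ (forall b, B b -> A (finv b)) /\
    (forall a, A a -> finv (f a) = a) /\ (forall b, B b -> f (finv b) = b) /\
    (forall g, stabiliser adj R dom c g ->
       forall b, B b -> g b = f (g (finv b))) /\
    (forall g, stabiliser adj R dom c g ->
       forall v, A v -> (g v = v <-> g (f v) = f v)).
Proof.
  intros [_ Hsym] _ _ DP MA MB [lA0 [LA0 HA0]] [lB0 [LB0 HB0]]
    [w [Bw [nRw [[a1 [Aa1 adj1]] [a2 [Aa2 nadj2]]]]]].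
  destruct (dedup V lA0) as [lA [NA [IA LA]]].
  destruct (dedup V lB0) as [lB [NB [IB LB]]].
  assert (HA : forall x, A x <-> In x lA) by (intro x; rewrite HA0; apply IA).
  assert (HB : forall x, B x <-> In x lB) by (intro x; rewrite HB0; apply IB).
  clear HA0 HB0 IA IB.
  pose proof (orb_closed _ _ _ _ _ _ _ DP MA) as clA.
  pose proof (orb_closed _ _ _ _ _ _ _ DP MB) as clB.
  pose proof (orb_trans _ _ _ _ _ _ _ DP MA) as trA.
  pose proof (orb_trans _ _ _ _ _ _ _ DP MB) as trB.
  assert (adjg : forall g x y, stabiliser adj R dom c g -> (adj (g x) (g y) <-> adj x y)).
  { intros g x y [[[_ ga] _] _]. symmetry; apply ga. }
  assert (constB : forall (Rl : V -> V -> Prop),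
    (forall g x y, stabiliser adj R dom c g -> (Rl (g x) (g y) <-> Rl x y)) ->
    forall b1 b2, B b1 -> B b2 -> cnt (Rl b1) lA = cnt (Rl b2) lA).
  { intros Rl Hinv b1 b2 B1 B2. destruct (trB b1 b2 B1 B2) as [g [Sg <-]].
    rewrite (cnt_inv _ adj C R dom c A lA (Rl (g b1)) g clA NA HA Sg).
    apply cnt_ext. intros; symmetry; apply Hinv; auto. }
  assert (constA : forall (Rl : V -> V -> Prop),
    (forall g x y, stabiliser adj R dom c g -> (Rl (g x) (g y) <-> Rl x y)) ->
    forall a1 a2, A a1 -> A a2 -> cnt (fun b => Rl b a1) lB = cnt (fun b => Rl b a2) lB).
  { intros Rl Hinv x1 x2 A1 A2. destruct (trA x1 x2 A1 A2) as [g [Sg <-]].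
    rewrite (cnt_inv _ adj C R dom c B lB (fun b => Rl b (g x1)) g clB NB HB Sg).
    apply cnt_ext. intros; symmetry; apply Hinv; auto. }
  set (k := cnt (adj w) lA).
  set (m := cnt (fun b => adj b a1) lB).
  assert (Hk : forall b, B b -> cnt (adj b) lA = k).
  { intros b Bb. apply (constB adj); auto. }
  assert (Hm : forall a, A a -> cnt (fun b => adj b a) lB = m).
  { intros a Aa. apply (constA adj); auto. }
  assert (Fub : k * length lB = m * length lA).
  { rewrite <- (sumf_const _ (fun b => cnt (adj b) lA) lB k), <- (sumf_const _ (fun a => cnt (fun b => adj b a) lB) lA m).
    - apply fubini.
    - intros x Ix; apply Hm, HA; auto.
    - intros x Ix; apply Hk, HB; auto. }
  assert (k0 : 0 < k) by (apply (cnt_ge1 _ _ _ a1); auto; apply HA; auto).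
  assert (kA : k < length lA) by (apply (cnt_lt_ex _ _ _ a2); auto; apply HA; auto).
  assert (m0 : 0 < m) by (apply (cnt_ge1 _ _ _ w); auto; apply HB; auto).
  destruct (arith (length lA) (length lB) k m ltac:(lia) ltac:(lia) k0 kA m0 Fub) as [EAB [Emk [mB Kc]]].
  split.
  { exists a1. split; [auto|]. unfold uncommon_neighbour. split; [eapply orb_notR; [exact MA| exact Aa1]|]. split.
    - exists w; split; auto.
    - destruct (cnt_lt _ _ _ mB) as [b [Ib nb]]. exists b; split; [apply HB; auto|].
      intro H; apply nb, Hsym; auto. }
  set (M := fun b a => (adj b a <-> k = 1)).
  assert (Minv : forall g x y, stabiliser adj R dom c g -> (M (g x) (g y) <-> M x y)).
  { intros g x y Sg. unfold M. rewrite adjg; auto. tauto. }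
  assert (MB1 : forall b, B b -> cnt (M b) lA = 1).
  { intros b Bb. destruct (Nat.eq_dec k 1) as [e|n].
    - rewrite (cnt_ext _ _ (adj b)); [rewrite Hk; auto|]. intros; unfold M; tauto.
    - rewrite (cnt_ext _ _ (fun a => ~ adj b a)); [|intros; unfold M; tauto].
      pose proof (cnt_compl _ (adj b) lA). rewrite Hk in H by auto. lia. }
  assert (MA1 : forall a, A a -> cnt (fun b => M b a) lB = 1).
  { intros a Aa. destruct (Nat.eq_dec k 1) as [e|n].
    - rewrite (cnt_ext _ _ (fun b => adj b a)); [rewrite Hm; auto; lia|].
      intros; unfold M; tauto.
    - rewrite (cnt_ext _ _ (fun b => ~ adj b a)); [|intros; unfold M; tauto].
      pose proof (cnt_compl _ (fun b => adj b a) lB). rewrite Hm in H by auto. lia. }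
  assert (exB : forall a, A a -> exists b, B b /\ M b a).
  { intros a Aa. destruct (cnt_pos _ (fun b => M b a) lB) as [b [Ib Mb]]; [rewrite MA1; auto|].
    exists b; split; auto; apply HB; auto. }
  assert (exA : forall b, B b -> exists a, A a /\ M b a).
  { intros b Bb. destruct (cnt_pos _ (M b) lA) as [a [Ia Ma]]; [rewrite MB1; auto|].
    exists a; split; auto; apply HA; auto. }
  assert (unB : forall a b b', A a -> B b -> B b' -> M b a -> M b' a -> b = b').
  { intros a b b' Aa Bb Bb' M1 M2. apply (cnt_one _ _ lB NB (MA1 a Aa)); auto;
    apply HB; auto. }
  assert (unA : forall b a a', B b -> A a -> A a' -> M b a -> M b a' -> a = a').
  { intros b a a' Bb Aa Aa' M1 M2. apply (cnt_one _ _ lA NA (MB1 b Bb)); auto;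
    apply HA; auto. }
  set (f := fun a => epsilon (inhabits w) (fun b => B b /\ M b a)).
  set (finv := fun b => epsilon (inhabits w) (fun a => A a /\ M b a)).
  assert (fS : forall a, A a -> B (f a) /\ M (f a) a).
  { intros a Aa. apply (epsilon_spec (inhabits w) (fun b => B b /\ M b a)). auto. }
  assert (fiS : forall b, B b -> A (finv b) /\ M b (finv b)).
  { intros b Bb. apply (epsilon_spec (inhabits w) (fun a => A a /\ M b a)). auto. }
  assert (ff1 : forall a, A a -> finv (f a) = a).
  { intros a Aa. destruct (fS a Aa) as [B1 M1]. destruct (fiS _ B1) as [A2 M2].
    apply (unA (f a)); auto. }
  assert (ff2 : forall b, B b -> f (finv b) = b).
  { intros b Bb. destruct (fiS b Bb) as [A1 M1]. destruct (fS _ A1) as [B2 M2].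
    apply (unB (finv b)); auto. }
  assert (eqv : forall g, stabiliser adj R dom c g -> forall a, A a -> g (f a) = f (g a)).
  { intros g Sg a Aa. destruct (fS a Aa) as [B1 M1].
    pose proof (clA g a Sg Aa) as Aga. destruct (fS _ Aga) as [B2 M2].
    apply (unB (g a)); auto. apply Minv; auto. }
  exists f, finv. split; [intros; apply fS; auto|].
  split; [intros; apply fiS; auto|].
  split; [auto|]. split; [auto|]. split.
  - intros g Sg b Bb. destruct (fiS b Bb) as [A1 _].
    rewrite <- (eqv g Sg _ A1), ff2; auto.
  - intros g Sg v Av. rewrite (eqv g Sg v Av). split; intro H.
    + rewrite H; auto.
    + rewrite <- (ff1 (g v)), H, ff1; auto.
Qed.
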